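(* Fix $k\ge3$, $c>0$ and $\zeta\in(0,1]$ with $\zeta(k-1)c^{k-1}<e$. Let $F=F^{(k)}_{c,\zeta}$. Then for all bounded measurable $f,g:[0,1]\to\mathbb R_{>0}$, $$\|\log F^2(f)-\log F^2(g)\|_\infty\le(1-\delta)\|\log f-\log g\|_\infty,\qquad\delta=1-\zeta c^{k-1}(k-1)e^{-1}.$$
   Context: $\alpha_k=\frac12\sum_{i=1}^k\min\left(\frac1{i-1},\frac1{k-i}\right)$ (with $1/0=+\infty$). For $\ell\in\{1,\dots,k\}$, $I_\ell=\{-\ell+1,\dots,k-\ell\}\setminus\{0\}$ and $w(t,\ell)=\min\{\frac t{\ell-1},\frac{1-t}{k-\ell}\}$ (quotients by $0$ are $+\infty$). The operator $F^{(k)}_{c,\zeta}$ on bounded measurable $f:[0,1]\to\mathbb R_{>0}$ is $F^{(k)}_{c,\zeta}f(t)=c\exp\left[-\frac{\zeta}{\alpha_k}\sum_{\ell=1}^k\int_0^{w(t,\ell)}\prod_{i\in I_\ell}f(t+is)\,ds\right]$. $F^2=F\circ F$; $\|\cdot\|_\infty$ is the supremum norm. *)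

(* Defs.v *)
From HB Require Import structures.
From mathcomp Require Import all_boot all_order all_algebra.
From mathcomp Require Import all_classical all_reals all_analysis.
Set Implicit Arguments. Unset Strict Implicit. Unset Printing Implicit Defensive.
Import Order.TTheory GRing.Theory Num.Theory.
Import numFieldNormedType.Exports.
Local Open Scope classical_set_scope.
Local Open Scope ring_scope.

Section Defs.
Variable R : realType.

Definition qinf (x y : R) : \bar R := if y == 0 then +oo%E else (x / y)%:E.

Definition alpha (k : nat) : R :=
  2^-1 * \sum_(1 <= i < k.+1)
     fine (Order.min (qinf 1 (i - 1)%:R) (qinf 1 (k - i)%:R)).

Definition wfun (k : nat) (t : R) (l : nat) : R :=
  fine (Order.min (qinf t (l - 1)%:R) (qinf (1 - t) (k - l)%:R)).

(* prod_{i in I_l} f(t + i s), with I_l = {-l+1,...,k-l} \ {0},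
   indexed as i = j - (l-1) for j = 0..k-1, j <> l-1 *)
Definition prodI (k l : nat) (f : R -> R) (t s : R) : R :=
  \prod_(0 <= j < k | j != (l - 1)%N)
     f (t + ((j%:Z - (l - 1)%:Z)%:~R) * s).

Definition Fop (k : nat) (c zeta : R) (f : R -> R) : R -> R :=
  fun t => c * expR (- (zeta / alpha k) *
     \sum_(1 <= l < k.+1)
        Rintegral lebesgue_measure `[0, wfun k t l] (fun s => prodI k l f t s)).

Definition supnorm (h : R -> R) : \bar R :=
  ereal_sup ((fun x => (`|h x|)%:E) @` `[0, 1]).

End Defs.

(* Main.v *)
Require Import Defs.
From HB Require Import structures.
From mathcomp Require Import all_boot all_order all_algebra.
From mathcomp Require Import all_classical all_reals all_analysis.
From mathcomp Require Import zify ring lra.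
From mathcomp Require Import measurable_realfun measurable_fun_approximation lebesgue_integral_fubini lebesgue_Rintegral lebesgue_integrable.
Import Order.TTheory GRing.Theory Num.Theory.
Import numFieldNormedType.Exports.
Local Open Scope classical_set_scope.
Local Open Scope ring_scope.
Set Implicit Arguments. Unset Strict Implicit. Unset Printing Implicit Defensive.

Section S.
Variable R : realType.

Lemma qmin_explicit (x y : R) (a b : nat) : (0 < a + b)%N ->
  fine (Order.min (qinf x a%:R) (qinf y b%:R)) =
  if a == 0%N then y / b%:R else if b == 0%N then x / a%:R
  else Num.min (x / a%:R) (y / b%:R).
Proof.
move=> hab; rewrite /qinf !pnatr_eq0.
case: a hab => [|a]; case: b => [|b] // _; rewrite ?eqxx.
- by rewrite -[a.+1 == 0%N]/false miney.
- by rewrite -[a.+1 == 0%N]/false -[b.+1 == 0%N]/false -EFin_min.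
Qed.

Lemma wfunE (k l : nat) (t : R) : (2 <= k)%N -> (1 <= l <= k)%N ->
  wfun k t l = if (l - 1 == 0)%N then (1 - t) / (k - l)%:R
    else if (k - l == 0)%N then t / (l - 1)%:R
    else Num.min (t / (l - 1)%:R) ((1 - t) / (k - l)%:R).
Proof. by move=> hk /andP[h1 h2]; rewrite /wfun qmin_explicit //; lia. Qed.

Lemma wfunE' (k l : nat) (t : R) : (2 <= k)%N ->
  wfun k t l = if (l - 1 == 0)%N then (1 - t) / (k - l)%:R
    else if (k - l == 0)%N then t / (l - 1)%:R
    else Num.min (t / (l - 1)%:R) ((1 - t) / (k - l)%:R).
Proof. by move=> hk; rewrite /wfun qmin_explicit //; lia. Qed.

Lemma wfun_props (k l : nat) (t : R) : (2 <= k)%N -> (1 <= l <= k)%N ->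
  0 <= t <= 1 ->
  [/\ 0 <= wfun k t l, (l - 1)%:R * wfun k t l <= t
      & (k - l)%:R * wfun k t l <= 1 - t].
Proof.
move=> hk hl /andP[t0 t1]; rewrite wfunE //.
have t1' : 0 <= 1 - t by rewrite subr_ge0.
case: eqP => [a0|/eqP a0].
  rewrite a0 mul0r; split => //.
    by rewrite divr_ge0.
  have b0 : (k - l)%:R != 0 :> R by rewrite pnatr_eq0; lia.
  by rewrite mulrC divfK.
case: eqP => [b0|/eqP b0].
  rewrite b0 mul0r subr_ge0; split => //.
    by rewrite divr_ge0.
  have a0' : (l - 1)%:R != 0 :> R by rewrite pnatr_eq0; lia.
  by rewrite mulrC divfK.
have a0' : (l - 1)%:R != 0 :> R by rewrite pnatr_eq0; lia.
have b0' : (k - l)%:R != 0 :> R by rewrite pnatr_eq0; lia.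
split.
- by rewrite le_min !divr_ge0.
- apply: (@le_trans _ _ ((l - 1)%:R * (t / (l - 1)%:R))).
    by rewrite ler_wpM2l // ge_min lexx.
  by rewrite mulrC divfK.
- apply: (@le_trans _ _ ((k - l)%:R * ((1 - t) / (k - l)%:R))).
    by rewrite ler_wpM2l // ge_min lexx orbT.
  by rewrite mulrC divfK.
Qed.

Lemma wfun_range (k l j : nat) (t s : R) : (2 <= k)%N -> (1 <= l <= k)%N ->
  (j < k)%N -> 0 <= t <= 1 -> 0 <= s <= wfun k t l ->
  0 <= t + ((j%:Z - (l - 1)%:Z)%:~R) * s <= 1.
Proof.
move=> hk hl hj ht /andP[s0 sW].
have [W0 aW bW] := wfun_props hk hl ht.
rewrite intrD intrN -!pmulrn.
have hjk : j%:R <= (l - 1)%:R + (k - l)%:R :> R.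
  by rewrite -natrD ler_nat; lia.
have a0 : 0 <= (l - 1)%:R :> R by [].
have j0 : 0 <= j%:R :> R by [].
move: ht => /andP[t0 t1].
apply/andP; split.
- have : (l - 1)%:R * s <= (l - 1)%:R * wfun k t l by rewrite ler_wpM2l.
  nra.
- have : (k - l)%:R * s <= (k - l)%:R * wfun k t l by rewrite ler_wpM2l.
  nra.
Qed.

Lemma min_add (x y z w : R) :
  Num.min x y + Num.min z w <= Num.min (x + z) (y + w).
Proof.
rewrite le_min; apply/andP; split; apply: lerD; by rewrite ge_min lexx ?orbT.
Qed.

Lemma wsum_sym (k : nat) (t : R) :
  \sum_(1 <= l < k.+1) wfun k (1 - t) l = \sum_(1 <= l < k.+1) wfun k t l.
Proof.
rewrite big_nat_rev /=; apply: eq_big_nat => l /andP[l1 lk].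
rewrite /wfun.
have -> : (1 + k.+1 - l.+1 - 1 = k - l)%N by lia.
have -> : (k - (1 + k.+1 - l.+1) = l - 1)%N by lia.
have -> : 1 - (1 - t) = t by ring.
by rewrite minC.
Qed.

Lemma wpair_le (k l : nat) (t : R) : (2 <= k)%N -> (1 <= l <= k)%N ->
  wfun k t l + wfun k (1 - t) l <=
  fine (Order.min (qinf 1 (l - 1)%:R) (qinf 1 (k - l)%:R)).
Proof.
move=> hk hl; rewrite !wfunE // qmin_explicit; last by lia.
have -> : 1 - (1 - t) = t by ring.
case: eqP => _; first by rewrite -mulrDl subrK.
case: eqP => _; first by rewrite -mulrDl addrC subrK.
apply: le_trans (min_add _ _ _ _) _.
by rewrite -!mulrDl subrK addrC subrK.
Qed.

Lemma wsum_le (k : nat) (t : R) : (2 <= k)%N ->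
  \sum_(1 <= l < k.+1) wfun k t l <= alpha R k.
Proof.
move=> hk; rewrite /alpha.
have -> : \sum_(1 <= l < k.+1) wfun k t l =
   2^-1 * \sum_(1 <= l < k.+1) (wfun k t l + wfun k (1 - t) l).
  rewrite big_split /= wsum_sym.
  lra.
rewrite ler_wpM2l // ?invr_ge0 //; apply: ler_sum_nat => l /andP[l1 lk].
by apply: wpair_le => //; lia.
Qed.

Lemma alpha_gt0 (k : nat) : (2 <= k)%N -> 0 < alpha R k.
Proof.
move=> hk; rewrite /alpha mulr_gt0 ?invr_gt0 //.
rewrite big_nat_recl; last by lia.
set A := fine _; set B := \sum_(_ <= _ < _) _.
suff [h1 h2] : 0 < A /\ 0 <= B by lra.
split.
- rewrite /A qmin_explicit /=; last by lia.
  by rewrite subn1 divr_gt0 // ltr0n; lia.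
- rewrite /B sumr_ge0 // => i _; rewrite qmin_explicit; last by lia.
  case: eqP => _; first by rewrite divr_ge0.
  case: eqP => _; first by rewrite divr_ge0.
  by rewrite le_min !divr_ge0.
Qed.

Lemma xexpN_le (x : R) : x * expR (- x) <= expR (-1).
Proof.
have h := expR_ge1Dx (x - 1).
have -> : expR (-1) = expR (x - 1) * expR (- x) by rewrite -expRD; congr expR; ring.
by rewrite ler_wpM2r ?expR_ge0 //; lra.
Qed.

Lemma keyK1 (a b eta : R) : 0 < b -> b <= a -> ln a - ln b <= eta ->
  expR (- b) - expR (- a) <= eta * expR (-1).
Proof.
move=> b0 ba hl.
have a0 : 0 < a by apply: lt_le_trans ba.
pose psi := expR \o (fun v : R => - expR v).
have dpsi : forall v : R, is_derive v (1:R) psi (expR (- expR v) * (- expR v)).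
  by move=> v; apply: is_derive1_comp.
have pa : psi (ln a) = expR (- a) by rewrite /psi /= lnK // posrE.
have pb : psi (ln b) = expR (- b) by rewrite /psi /= lnK // posrE.
have lba : ln b <= ln a by rewrite ler_ln // posrE.
case: (eqVneq (ln b) (ln a)) => [eab|neab].
  rewrite -pa -pb eab subrr mulr_ge0 ?expR_ge0 //.
  by rewrite eab subrr in hl.
have lt : ln b < ln a by rewrite lt_neqAle neab.
have cpsi : {within `[ln b, ln a], continuous psi}.
  apply/continuous_subspaceT => r.
  apply/differentiable_continuous/derivable1_diffP.
  by have [] := dpsi r.
have [xi _ hxi] := MVT lt (fun x _ => dpsi x) cpsi.
rewrite -pa -pb.
have -> : psi (ln b) - psi (ln a) = - (psi (ln a) - psi (ln b)) by ring.
rewrite hxi.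
have h1 := xexpN_le (expR xi).
have h2 : 0 <= ln a - ln b by lra.
have h3 : 0 <= expR xi * expR (- expR xi) by rewrite mulr_ge0 ?expR_ge0.
have -> : - (expR (- expR xi) * - expR xi * (ln a - ln b)) =
  (expR xi * expR (- expR xi)) * (ln a - ln b) by ring.
apply: le_trans (_ : expR (-1) * (ln a - ln b) <= _).
  by rewrite ler_wpM2r.
by rewrite mulrC ler_wpM2r ?expR_ge0.
Qed.

Lemma keyK (a b eta : R) : 0 <= eta -> 0 <= a -> 0 <= b ->
  a <= expR eta * b -> b <= expR eta * a ->
  `|expR (- a) - expR (- b)| <= eta * expR (-1).
Proof.
move=> e0.
wlog hba : a b / b <= a.
  move=> H a0 b0 h1 h2; case: (leP b a) => hab; first exact: H.
  by rewrite distrC H // ltW.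
move=> a0 b0 h1 h2.
have -> : `|expR (- a) - expR (- b)| = expR (- b) - expR (- a).
  rewrite distrC ger0_norm // subr_ge0 ler_expR; lra.
case: (eqVneq b 0) => [eb|bn0].
  rewrite eb mulr0 in h1.
  have -> : a = 0 by apply/eqP; rewrite eq_le a0 andbT.
  by rewrite eb subrr mulr_ge0 ?expR_ge0.
have bp : 0 < b by rewrite lt_neqAle eq_sym bn0.
apply: keyK1 => //.
have ap : 0 < a by apply: lt_le_trans hba.
have : ln a <= ln (expR eta * b).
  by rewrite ler_ln // posrE // mulr_gt0 ?expR_gt0.
by rewrite lnM ?posrE ?expR_gt0 // expRK; lra.
Qed.
End S.


Section M.
Variable R : realType.
Notation mu := (@lebesgue_measure R).

Lemma mW (k l : nat) : (2 <= k)%N ->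
  measurable_fun setT (fun x : R => wfun k x l).
Proof.
move=> hk.
have -> : (fun x : R => wfun k x l) = (fun x => if (l - 1 == 0)%N then (1 - x) / (k - l)%:R
    else if (k - l == 0)%N then x / (l - 1)%:R
    else Num.min (x / (l - 1)%:R) ((1 - x) / (k - l)%:R)).
  by apply/funext => x; rewrite wfunE'.
have m1 : measurable_fun setT (fun x : R => (1 - x) / (k - l)%:R).
  by apply: measurable_funM => //; apply: measurable_funB.
have m2 : measurable_fun setT (fun x : R => x / (l - 1)%:R).
  by apply: measurable_funM.
case: eqP => _ //; case: eqP => _ //.
exact: measurable_minr.
Qed.

Definition Pf (k l : nat) (u : R -> R) (z : R * R) : R := prodI k l u z.1 z.2.

Lemma mPf k l u : measurable_fun setT u -> measurable_fun setT (Pf k l u).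
Proof.
move=> mu_.
have -> : Pf k l u = fun z => \prod_(j <- index_iota 0 k)
    (if j != (l - 1)%N then u (z.1 + ((j%:Z - (l - 1)%:Z)%:~R) * z.2) else 1).
  by apply/funext => z; rewrite /Pf /prodI big_mkcond.
have H : forall j, j \in index_iota 0 k -> measurable_fun setT (fun z : R * R => if j != (l - 1)%N
  then u (z.1 + ((j%:Z - (l - 1)%:Z)%:~R) * z.2) else 1).
  move=> j _ /=.
  case: (j != (l - 1)%N); last exact: measurable_cst.
  apply: measurableT_comp => //.
  exact: (measurable_funD measurable_fst (measurable_funM (measurable_cst _) measurable_snd)).
exact: (measurable_prod H).
Qed.

Definition hfun (k l : nat) (u : R -> R) (z : R * R) : \bar R :=
  (if (0 <= z.2) && (z.2 <= wfun k z.1 l) then Pf k l u z else 0)%:E.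

Lemma mhfun k l u : (2 <= k)%N ->
  measurable_fun setT u -> measurable_fun setT (hfun k l u).
Proof.
move=> hk mu_; apply/measurable_EFinP.
have mb : measurable_fun setT (fun z : R * R => (0 <= z.2) && (z.2 <= wfun k z.1 l)).
  have m1 := measurable_fun_ler (measurable_cst (0:R)) (@measurable_snd _ _ R R).
  have m2 := measurable_fun_ler (@measurable_snd _ _ R R) (measurableT_comp (mW l hk) (@measurable_fst _ _ R R)).
  exact: (measurable_and m1 m2).
exact: (measurable_fun_ifT mb (mPf k l mu_) (measurable_cst (0:R))).
Qed.

Lemma AintE k l u x :
  Rintegral mu `[0, wfun k x l] (fun s => prodI k l u x s) =
  fine (fubini_F mu (hfun k l u) x).
Proof.
rewrite /Rintegral /fubini_F integral_mkcond; congr fine.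
apply: eq_integral => s _; rewrite /patch /hfun /Pf /=.
case: (boolP (0 <= s <= wfun k x l)) => h.
  by rewrite mem_set //= in_itv /=.
rewrite memNset //= in_itv /=; exact/negP.
Qed.

Lemma mAint (k l : nat) (u : R -> R) : (2 <= k)%N -> measurable_fun setT u -> (forall x, 0 <= u x) ->
  measurable_fun setT (fun x => Rintegral mu `[0, wfun k x l] (fun s => prodI k l u x s)).
Proof.
move=> hk mu_ u0.
have -> : (fun x => Rintegral mu `[0, wfun k x l] (fun s => prodI k l u x s)) =
   fine \o fubini_F mu (hfun k l u).
  by apply/funext => x; rewrite AintE.
have h0 : forall z, (0 <= hfun k l u z)%E.
  move=> z; rewrite /hfun lee_fin; case: ifP => // _.
  by rewrite /Pf /prodI prodr_ge0.
apply: measurableT_comp => //.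
exact: (@measurable_fun_fubini_tonelli_F _ _ _ _ _ mu (hfun k l u) (mhfun l hk mu_) h0).
Qed.

Lemma mFop (k : nat) (c zeta : R) (u : R -> R) : (2 <= k)%N -> measurable_fun setT u -> (forall x, 0 <= u x) ->
  measurable_fun setT (Fop k c zeta u).
Proof.
move=> hk mu_ u0.
have ms : measurable_fun setT (fun x => \sum_(l <- index_iota 1 k.+1)
   Rintegral mu `[0, wfun k x l] (fun s => prodI k l u x s)).
  by apply: measurable_sum => l; exact: mAint.
have m2 := measurable_funM (measurable_cst (- (zeta / alpha R k))) ms.
have m3 := measurableT_comp (continuous_measurable_fun (@continuous_expR R)) m2.
exact: (measurable_funM (measurable_cst c) m3).
Qed.
End M.


Section L.
Variable R : realType.
Notation mu := (@lebesgue_measure R).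

Lemma prod_const (k l : nat) (x : R) : (1 <= l <= k)%N ->
  \prod_(0 <= j < k | j != (l - 1)%N) x = x ^+ (k - 1).
Proof.
move=> hl; rewrite big_const_seq.
have -> : count (fun j => j != (l - 1)%N) (index_iota 0 k) = (k - 1)%N.
  have := count_predC (pred1 (l - 1)%N) (index_iota 0 k).
  rewrite /index_iota subn0 size_iota.
  have -> : count (pred1 (l - 1)%N) (iota 0 k) = 1%N.
    by rewrite (count_uniq_mem _ (iota_uniq 0 k)) mem_iota; case: (ltnP (l - 1) k) => h //; lia.
  move=> h; rewrite -[count _ _]/(count (predC (pred1 (l - 1)%N)) (iota 0 k)); lia.
by rewrite iter_mulr_1.
Qed.

Lemma mprod (k l : nat) (u : R -> R) (t : R) : measurable_fun setT u ->
  measurable_fun setT (fun s => prodI k l u t s).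
Proof.
move=> mu_.
have -> : (fun s => prodI k l u t s) = fun s => \prod_(j <- index_iota 0 k)
    (if j != (l - 1)%N then u (t + ((j%:Z - (l - 1)%:Z)%:~R) * s) else 1).
  by apply/funext => z; rewrite /prodI big_mkcond.
have H : forall j, j \in index_iota 0 k -> measurable_fun setT (fun s : R => if j != (l - 1)%N
  then u (t + ((j%:Z - (l - 1)%:Z)%:~R) * s) else 1).
  move=> j _ /=.
  case: (j != (l - 1)%N); last exact: measurable_cst.
  apply: measurableT_comp => //.
  exact: (measurable_funD (measurable_cst t) (measurable_funM (measurable_cst _) (@measurable_id _ R setT))).
exact: (measurable_prod H).
Qed.

Lemma integ_prod (k l : nat) (u : R -> R) (M t : R) :
  measurable_fun setT u -> (forall x, 0 <= u x <= M) ->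
  mu.-integrable `[0, wfun k t l] (EFin \o (fun s => prodI k l u t s)).
Proof.
move=> mu_ hu.
apply: measurable_bounded_integrable => //.
- have h := @lebesgue_measure_itv R `[0, wfun k t l].
  have fin : (mu (`[0%R, wfun k t l]%classic : set R) < +oo)%E.
    rewrite h /=; case: ifP => _ //; rewrite ?ltry //.
  exact: fin.
- exact: measurable_funS (mprod k l t mu_).
- exists (\prod_(0 <= j < k | j != (l - 1)%N) M); split; first by rewrite num_real.
  move=> B hB s _.
  rewrite /= ger0_norm; last by rewrite /prodI prodr_ge0 // => j _; have /andP[] := hu (t + ((j%:Z - (l - 1)%:Z)%:~R) * s).
  apply: ltW; apply: le_lt_trans hB.
  by rewrite /prodI ler_prod // => j _; exact: hu.
Qed.


Definition Asum (k : nat) (u : R -> R) (t : R) := \sum_(1 <= l < k.+1)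
  Rintegral mu `[0, wfun k t l] (fun s => prodI k l u t s).

Lemma FopE k (c zeta : R) u t : Fop k c zeta u t = c * expR (- (zeta / alpha R k) * Asum k u t).
Proof. by []. Qed.

Lemma Asum_ge0 k (u : R -> R) t : (forall x, 0 <= u x) -> 0 <= Asum k u t.
Proof.
move=> u0; rewrite /Asum sumr_ge0 // => l _; apply: Rintegral_ge0 => s _.
by rewrite /prodI prodr_ge0.
Qed.

Lemma memW (k l : nat) (t s : R) : s \in (`[0, wfun k t l]%classic : set R) -> 0 <= s <= wfun k t l.
Proof. by rewrite in_setE /= in_itv. Qed.

Lemma Fop_eq k (c zeta : R) (u v : R -> R) t : (2 <= k)%N -> (forall x, 0 <= x <= 1 -> u x = v x) ->
  0 <= t <= 1 -> Fop k c zeta u t = Fop k c zeta v t.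
Proof.
move=> hk huv ht; rewrite !FopE /Asum; congr (c * expR (_ * _)).
apply: eq_big_nat => l hl; apply: eq_Rintegral => s /memW hs.
rewrite /prodI big_seq_cond [RHS]big_seq_cond.
apply: eq_bigr => j /andP[]; rewrite mem_index_iota => /andP[_ hj] _.
by apply: huv; apply: (wfun_range hk hl hj ht hs).
Qed.

Lemma prodI_scale k l (r : R) (v : R -> R) t s : (1 <= l <= k)%N ->
  prodI k l (fun x => r * v x) t s = r ^+ (k - 1) * prodI k l v t s.
Proof. by move=> hl; rewrite /prodI big_split /= prod_const. Qed.

Lemma layer1 k (u v : R -> R) (r M t : R) : (2 <= k)%N ->
  measurable_fun setT u -> measurable_fun setT v ->
  (forall x, 0 <= u x <= M) -> (forall x, 0 <= v x <= M) -> 0 <= r ->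
  (forall x, 0 <= x <= 1 -> u x <= r * v x) -> 0 <= t <= 1 ->
  Asum k u t <= r ^+ (k - 1) * Asum k v t.
Proof.
move=> hk mu_ mv hu hv r0 huv ht.
rewrite /Asum mulr_sumr; apply: ler_sum_nat => l hl.
have mrv : measurable_fun setT (fun x => r * v x).
  exact: (measurable_funM (measurable_cst r) mv).
have hrv : forall x, 0 <= r * v x <= r * M.
  move=> x; have /andP[h1 h2] := hv x.
  by rewrite mulr_ge0 // ler_wpM2l.
rewrite -RintegralZl //; last exact: integ_prod mv hv.
have -> : Rintegral mu `[0, wfun k t l] (fun x => r ^+ (k - 1) * prodI k l v t x) =
  Rintegral mu `[0, wfun k t l] (fun x => prodI k l (fun y => r * v y) t x).
  by apply: eq_Rintegral => x _; rewrite prodI_scale.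
apply: le_Rintegral => //.
- exact: integ_prod mu_ hu.
- exact: integ_prod mrv hrv.
move=> s /= hs.
have {}hs : 0 <= s <= wfun k t l by move: hs; rewrite /= in_itv.
rewrite /prodI big_seq_cond [X in _ <= X]big_seq_cond.
apply: ler_prod => j /andP[]; rewrite mem_index_iota => /andP[_ hj] _.
have hx := wfun_range hk hl hj ht hs.
by have /andP[-> _] := hu (t + ((j%:Z - (l - 1)%:Z)%:~R) * s); rewrite huv.
Qed.

Lemma prodI_Fop k l (c zeta : R) (u : R -> R) t s : (1 <= l <= k)%N ->
  prodI k l (Fop k c zeta u) t s = c ^+ (k - 1) *
    expR (- (zeta / alpha R k * \sum_(0 <= j < k | j != (l - 1)%N)
        Asum k u (t + ((j%:Z - (l - 1)%:Z)%:~R) * s))).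
Proof.
move=> hl; rewrite /prodI; under eq_bigr do rewrite FopE.
rewrite big_split /= prod_const //; congr (_ * _).
rewrite -expR_sum; congr expR.
by rewrite mulr_sumr -sumrN; apply: eq_bigr => j _; rewrite mulNr.
Qed.
End L.


Section L2.
Variable R : realType.
Notation mu := (@lebesgue_measure R).

Lemma abs_split (x y z : R) : `|x - y| <= z -> x <= y + z /\ y <= x + z.
Proof. rewrite ler_norml => /andP[h1 h2]; split; lra. Qed.

Lemma abs_join (x y z : R) : x <= y + z -> y <= x + z -> `|x - y| <= z.
Proof. move=> h1 h2; rewrite ler_norml; apply/andP; split; lra. Qed.

Lemma ln_diff (L x y q : R) : (L + - q * x) - (L + - q * y) = - q * (x - y).
Proof. ring. Qed.

Lemma integ_gen (h : R -> R) (a b B : R) : measurable_fun setT h ->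
  (forall x, `|h x| <= B) -> mu.-integrable `[a, b] (EFin \o h).
Proof.
move=> mh hB.
apply: measurable_bounded_integrable => //.
- have h1 := @lebesgue_measure_itv R `[a, b].
  have fin : (mu (`[a, b]%classic : set R) < +oo)%E.
    rewrite h1 /=; case: ifP => _ //; rewrite ?ltry //.
  exact: fin.
- exact: measurable_funS mh.
- exists B; split; first by rewrite num_real.
  move=> B' hB' s _ /=; apply: le_trans (hB s) _; exact: ltW.
Qed.

Lemma measW (k l : nat) (t : R) : 0 <= wfun k t l ->
  fine (mu (`[0%R, wfun k t l]%classic : set R)) = wfun k t l.
Proof.
move=> W0.
have h1 := @lebesgue_measure_itv R `[0, wfun k t l].
have -> : mu (`[0%R, wfun k t l]%classic : set R) = (wfun k t l)%:E.
  rewrite h1 /=; case: ifP => h; first by rewrite sube0.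
  have hW : wfun k t l = 0.
    by apply/eqP; rewrite eq_le W0 andbT leNgt -lte_fin h.
  by rewrite hW.
by [].
Qed.

Lemma prodI_bnd k l (V : R -> R) (c t s : R) : (forall x, 0 <= V x <= c) ->
  0 <= prodI k l V t s <= \prod_(0 <= j < k | j != (l - 1)%N) c.
Proof.
move=> hV; rewrite /prodI prodr_ge0 /=; last by move=> j _; case/andP: (hV (t + ((j%:Z - (l - 1)%:Z)%:~R) * s)).
by rewrite ler_prod // => j _; exact: hV.
Qed.

Lemma Aint_cmp k l (U V : R -> R) (c D t : R) : (2 <= k)%N -> (1 <= l <= k)%N ->
  measurable_fun setT U -> measurable_fun setT V ->
  (forall x, 0 <= U x <= c) -> (forall x, 0 <= V x <= c) ->
  0 <= t <= 1 ->
  (forall s, 0 <= s <= wfun k t l -> prodI k l U t s <= prodI k l V t s + D) ->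
  Rintegral mu `[0, wfun k t l] (fun s => prodI k l U t s) <=
  Rintegral mu `[0, wfun k t l] (fun s => prodI k l V t s) + D * wfun k t l.
Proof.
move=> hk hl mU mV hU hV ht hUV.
have [W0 _ _] := wfun_props hk hl ht.
set P := \prod_(0 <= j < k | j != (l - 1)%N) c.
have iU := integ_prod k l t mU hU.
have iV := integ_prod k l t mV hV.
have iD : mu.-integrable `[0, wfun k t l] (EFin \o (fun _ : R => D)).
  apply: (@integ_gen _ _ _ `|D|); [exact: measurable_cst | by []].
have iVD : mu.-integrable `[0, wfun k t l] (EFin \o (fun s => prodI k l V t s + D)).
  apply: (@integ_gen _ _ _ (P + `|D|)).
    exact: (measurable_funD (mprod k l t mV) (measurable_cst D)).
  move=> x; apply: le_trans (ler_normD _ _) _; rewrite lerD2r.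
  have /andP[h1 h2] := prodI_bnd k l t x hV.
  by rewrite ger0_norm.
apply: le_trans (_ : _ <= Rintegral mu `[0, wfun k t l] (fun s => prodI k l V t s + D)) _.
  apply: le_Rintegral => // s; rewrite /= in_itv => hs; exact: hUV.
rewrite RintegralD //.
by rewrite Rintegral_cst // measW.
Qed.

Lemma ln_Fop_diff k (c zeta : R) (U V : R -> R) t : 0 < c -> 0 <= zeta / alpha R k ->
  `|ln (Fop k c zeta U t) - ln (Fop k c zeta V t)| =
  zeta / alpha R k * `|Asum k U t - Asum k V t|.
Proof.
move=> c0 k0; rewrite !FopE !lnM ?posrE ?expR_gt0 // !expRK ln_diff.
by rewrite normrM normrN (ger0_norm k0).
Qed.

Lemma layer2 (k : nat) (c zeta : R) (u v : R -> R) (M eta t : R) :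
  (2 <= k)%N -> 0 < c -> 0 < zeta ->
  measurable_fun setT u -> measurable_fun setT v ->
  (forall x, 0 <= u x <= M) -> (forall x, 0 <= v x <= M) -> 0 <= eta ->
  (forall y, 0 <= y <= 1 -> Asum k u y <= expR eta * Asum k v y) ->
  (forall y, 0 <= y <= 1 -> Asum k v y <= expR eta * Asum k u y) ->
  0 <= t <= 1 ->
  `|ln (Fop k c zeta (Fop k c zeta u) t) - ln (Fop k c zeta (Fop k c zeta v) t)| <=
    zeta * (c ^+ (k - 1) * (eta * expR (-1))).
Proof.
move=> hk c0 z0 mu_ mv hu hv e0 huv hvu ht.
have ap := alpha_gt0 R hk.
have k0 : 0 <= zeta / alpha R k by rewrite divr_ge0 // ltW.
have u0 : forall x, 0 <= u x by move=> x; case/andP: (hu x).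
have v0 : forall x, 0 <= v x by move=> x; case/andP: (hv x).
have Fb : forall w : R -> R, (forall x, 0 <= w x) -> forall x, 0 <= Fop k c zeta w x <= c.
  move=> w w0 x; rewrite FopE; apply/andP; split.
    by rewrite mulr_ge0 ?expR_ge0 ?ltW.
  rewrite -[X in _ <= X]mulr1 ler_pM2l // expR_le1 mulNr oppr_le0.
  by rewrite mulr_ge0 // Asum_ge0.
have mU := mFop c zeta hk mu_ u0.
have mV := mFop c zeta hk mv v0.
have hU := Fb u u0.
have hV := Fb v v0.
set D := c ^+ (k - 1) * (eta * expR (-1)).
have C0 : 0 <= c ^+ (k - 1) by rewrite exprn_ge0 // ltW.
have D0 : 0 <= D by rewrite mulr_ge0 // mulr_ge0 // expR_ge0.
have key : forall l, (1 <= l <= k)%N -> forall s, 0 <= s <= wfun k t l ->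
    prodI k l (Fop k c zeta u) t s <= prodI k l (Fop k c zeta v) t s + D /\
    prodI k l (Fop k c zeta v) t s <= prodI k l (Fop k c zeta u) t s + D.
  move=> l hl s hs; rewrite !prodI_Fop //.
  set a := _ * \sum_(_ <= _ < _ | _) Asum k u _.
  set b := _ * \sum_(_ <= _ < _ | _) Asum k v _.
  have a0 : 0 <= a by rewrite /a mulr_ge0 // sumr_ge0 // => j _; exact: Asum_ge0.
  have b0 : 0 <= b by rewrite /b mulr_ge0 // sumr_ge0 // => j _; exact: Asum_ge0.
  have cmp : forall (w1 w2 : R -> R),
      (forall y, 0 <= y <= 1 -> Asum k w1 y <= expR eta * Asum k w2 y) ->
      zeta / alpha R k * \sum_(0 <= j < k | j != (l - 1)%N)
        Asum k w1 (t + ((j%:Z - (l - 1)%:Z)%:~R) * s) <=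
      expR eta * (zeta / alpha R k * \sum_(0 <= j < k | j != (l - 1)%N)
        Asum k w2 (t + ((j%:Z - (l - 1)%:Z)%:~R) * s)).
    move=> w1 w2 hw; rewrite mulrCA ler_wpM2l // mulr_sumr.
    rewrite big_seq_cond [X in _ <= X]big_seq_cond.
    apply: ler_sum => j /andP[]; rewrite mem_index_iota => /andP[_ hj] _.
    by apply: hw; exact: wfun_range hk hl hj ht hs.
  have hab := keyK e0 a0 b0 (cmp u v huv) (cmp v u hvu).
  have [h1 h2] := abs_split hab.
  by split; rewrite /D -mulrDr; apply: ler_wpM2l.
have hl : forall l, (1 <= l <= k)%N ->
    `|Rintegral mu `[0, wfun k t l] (fun s => prodI k l (Fop k c zeta u) t s) -
      Rintegral mu `[0, wfun k t l] (fun s => prodI k l (Fop k c zeta v) t s)|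
    <= D * wfun k t l.
  move=> l hl.
  have h1 : Rintegral mu `[0, wfun k t l] (fun s => prodI k l (Fop k c zeta u) t s) <=
    Rintegral mu `[0, wfun k t l] (fun s => prodI k l (Fop k c zeta v) t s) + D * wfun k t l.
    apply: (@Aint_cmp k l (Fop k c zeta u) (Fop k c zeta v) c D t hk hl mU mV hU hV ht).
    by move=> s hs; case: (key l hl s hs).
  have h2 : Rintegral mu `[0, wfun k t l] (fun s => prodI k l (Fop k c zeta v) t s) <=
    Rintegral mu `[0, wfun k t l] (fun s => prodI k l (Fop k c zeta u) t s) + D * wfun k t l.
    apply: (@Aint_cmp k l (Fop k c zeta v) (Fop k c zeta u) c D t hk hl mV mU hV hU ht).
    by move=> s hs; case: (key l hl s hs).
  exact: (abs_join h1 h2).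
have hA : `|Asum k (Fop k c zeta u) t - Asum k (Fop k c zeta v) t| <= D * alpha R k.
  rewrite /Asum -sumrB; apply: le_trans (ler_norm_sum _ _ _) _.
  apply: le_trans (_ : _ <= \sum_(1 <= l < k.+1) D * wfun k t l) _.
    by apply: ler_sum_nat => l hl1; apply: hl.
  by rewrite -mulr_sumr ler_wpM2l // wsum_le.
rewrite (@ln_Fop_diff k c zeta (Fop k c zeta u) (Fop k c zeta v) t c0 k0).
apply: le_trans (ler_wpM2l k0 hA) _.
by rewrite [D * alpha R k]mulrC mulrA divfK ?gt_eqF.
Qed.
End L2.


Lemma inI01 (R : realType) (x : R) : (x \in (`[0, 1]%classic : set R)) = (0 <= x <= 1).
Proof.
apply/idP/idP => [/set_mem /=|h]; first by rewrite in_itv.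
by apply/mem_set; rewrite /= in_itv.
Qed.

Unset Implicit Arguments. Set Strict Implicit. Set Printing Implicit Defensive.

Theorem mainTheorem20 (R : realType) (k : nat) (c zeta : R)
  (hk : (3 <= k)%N) (hc : 0 < c) (hz0 : 0 < zeta) (hz1 : zeta <= 1)
  (hcond : zeta * (k - 1)%:R * c ^+ (k - 1) < expR 1)
  (f g : R -> R)
  (fmeas : measurable_fun (`[0, 1] : set R) f)
  (gmeas : measurable_fun (`[0, 1] : set R) g)
  (fpos : forall x, x \in `[0, 1] -> 0 < f x)
  (gpos : forall x, x \in `[0, 1] -> 0 < g x)
  (fbdd : exists M : R, forall x, x \in `[0, 1] -> f x <= M)
  (gbdd : exists M : R, forall x, x \in `[0, 1] -> g x <= M) :
  let F := Fop k c zeta in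
  let delta := 1 - zeta * c ^+ (k - 1) * (k - 1)%:R * (expR 1)^-1 in
  (supnorm (fun t => (ln (F (F f) t) - ln (F (F g) t))%R)
    <= (1 - delta)%:E * supnorm (fun t => (ln (f t) - ln (g t))%R))%E.
Proof.
cbv zeta.
rewrite (_ : 1 - (1 - zeta * c ^+ (k - 1) * (k - 1)%:R * (expR 1)^-1) =
  zeta * c ^+ (k - 1) * (k - 1)%:R * (expR 1)^-1); last by ring.
have hk2 : (2 <= k)%N by lia.
have hd0 : 0 < zeta * c ^+ (k - 1) * (k - 1)%:R * (expR 1)^-1.
  rewrite !mulr_gt0 ?invr_gt0 ?expR_gt0 ?exprn_gt0 // ltr0n; lia.
pose f' := fun x : R => if 0 <= x <= 1 then f x else 0.
pose g' := fun x : R => if 0 <= x <= 1 then g x else 0.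
have m01 : measurable (`[0, 1]%classic : set R) by [].
have mf' : measurable_fun setT f'.
  have -> : f' = f \_ (`[0, 1]%classic : set R).
    by apply/funext => x; rewrite /patch inI01.
  by apply/(measurable_restrictT f m01).
have mg' : measurable_fun setT g'.
  have -> : g' = g \_ (`[0, 1]%classic : set R).
    by apply/funext => x; rewrite /patch inI01.
  by apply/(measurable_restrictT g m01).
have [Mf hMf] := fbdd.
have [Mg hMg] := gbdd.
set M := `|Mf| + `|Mg|.
have hf' : forall x, 0 <= f' x <= M.
  move=> x; rewrite /f'; case: ifP => h; last by rewrite lexx /M addr_ge0.
  have fx : 0 < f x by apply: fpos; rewrite ?inI01 ?in_itv //=.
  have fM : f x <= Mf by apply: hMf; rewrite ?inI01 ?in_itv //=.
  rewrite ltW //=; apply: (le_trans fM); apply: (le_trans (ler_norm Mf)).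
  by rewrite /M lerDl.
have hg' : forall x, 0 <= g' x <= M.
  move=> x; rewrite /g'; case: ifP => h; last by rewrite lexx /M addr_ge0.
  have gx : 0 < g x by apply: gpos; rewrite ?inI01 ?in_itv //=.
  have gM : g x <= Mg by apply: hMg; rewrite ?inI01 ?in_itv //=.
  rewrite ltW //=; apply: (le_trans gM); apply: (le_trans (ler_norm Mg)).
  by rewrite /M lerDr.
have eqF : forall t, 0 <= t <= 1 -> Fop k c zeta (Fop k c zeta f) t = Fop k c zeta (Fop k c zeta f') t.
  move=> t ht; apply: Fop_eq => // x hx; apply: Fop_eq => // y hy.
  by rewrite /f' hy.
have eqG : forall t, 0 <= t <= 1 -> Fop k c zeta (Fop k c zeta g) t = Fop k c zeta (Fop k c zeta g') t.
  move=> t ht; apply: Fop_eq => // x hx; apply: Fop_eq => // y hy.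
  by rewrite /g' hy.
set S := supnorm (fun t => (ln (f t) - ln (g t))%R).
have S_ge : forall x, 0 <= x <= 1 -> (`|ln (f x) - ln (g x)|%:E <= S)%E.
  move=> x hx; apply: ereal_sup_ubound; exists x => //.
have h01 : 0 <= (0:R) <= 1 by rewrite lexx ler01.
case hS : S => [e| |]; last first.
- by have := S_ge 0 h01; rewrite hS leeNy_eq.
- by rewrite gt0_muley ?leey // lte_fin.
have he : forall x, 0 <= x <= 1 -> `|ln (f x) - ln (g x)| <= e.
  by move=> x hx; rewrite -lee_fin -hS; exact: S_ge.
have e0 : 0 <= e by apply: le_trans (he 0 h01).
have fg : forall x, 0 <= x <= 1 -> f' x <= expR e * g' x.
  move=> x hx; rewrite /f' /g' hx.
  have fx : 0 < f x by apply: fpos; rewrite ?inI01 ?in_itv //=.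
  have gx : 0 < g x by apply: gpos; rewrite ?inI01 ?in_itv //=.
  have := he x hx; rewrite ler_norml => /andP[_ h2].
  rewrite -[f x]lnK ?posrE // -[g x]lnK ?posrE // -expRD ler_expR; lra.
have gf : forall x, 0 <= x <= 1 -> g' x <= expR e * f' x.
  move=> x hx; rewrite /f' /g' hx.
  have fx : 0 < f x by apply: fpos; rewrite ?inI01 ?in_itv //=.
  have gx : 0 < g x by apply: gpos; rewrite ?inI01 ?in_itv //=.
  have := he x hx; rewrite ler_norml => /andP[h1 _].
  rewrite -[f x]lnK ?posrE // -[g x]lnK ?posrE // -expRD ler_expR; lra.
have A1 : forall y, 0 <= y <= 1 -> Asum k f' y <= expR ((k - 1)%:R * e) * Asum k g' y.
  by move=> y hy; rewrite expRM_natl; exact: (layer1 hk2 mf' mg' hf' hg' (expR_ge0 e) fg hy).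
have A2 : forall y, 0 <= y <= 1 -> Asum k g' y <= expR ((k - 1)%:R * e) * Asum k f' y.
  by move=> y hy; rewrite expRM_natl; exact: (layer1 hk2 mg' mf' hg' hf' (expR_ge0 e) gf hy).
have eta0 : 0 <= (k - 1)%:R * e by rewrite mulr_ge0.
have L := layer2 hk2 hc hz0 mf' mg' hf' hg' eta0 A1 A2.
apply: ge_ereal_sup => _ [t ht <-].
have {}ht : 0 <= t <= 1 by move: ht; rewrite /= in_itv.
rewrite eqF // eqG // -EFinM lee_fin; apply: le_trans (L t ht) _.
rewrite expRN.
suff -> : zeta * (c ^+ (k - 1) * ((k - 1)%:R * e * (expR 1)^-1)) =
  zeta * c ^+ (k - 1) * (k - 1)%:R * (expR 1)^-1 * e by [].
ring.
Qed.
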